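(* (1) $\to_{wv}$ is quasi-strongly confluent: ${}_{wv}\!\!\leftarrow\cdot\to_{wv}\ \subseteq\ (\to_{wv}\cdot\,{}_{wv}\!\!\leftarrow)\,\cup=$. (2) $\to_{wd}$ and $\to_d$ are each quasi-strongly confluent: ${}_{wd}\!\!\leftarrow\cdot\to_{wd}\subseteq(\to_{wd}\cdot\,{}_{wd}\!\!\leftarrow)\cup=$ and ${}_{d}\!\leftarrow\cdot\to_{d}\subseteq(\to_{d}\cdot\,{}_{d}\!\leftarrow)\cup=$. (3) ${}_{wd}\!\!\leftarrow\cdot\to_{wv}\ \subseteq\ \to_{wv}\cdot\,{}_{wd}\!\!\leftarrow$; moreover ${}_{d}\!\leftarrow\cdot\to_{v}\ \subseteq\ \to_{v}\cdot\,{}^*_{d}\!\leftarrow$; and ${}^*_{d}\!\leftarrow\cdot\to_v^*\ \subseteq\ \to_v^*\cdot\,{}^*_{d}\!\leftarrow$. (4) $\to_v$ is confluent: ${}^*_{v}\!\leftarrow\cdot\to_v^*\ \subseteq\ \to_v^*\cdot\,{}^*_{v}\!\leftarrow$.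
   Context: Bang calculus. Fix a countably infinite set of variables. The set $!\Lambda$ of terms is $T,S,R ::= x \mid \lambda x.T \mid T\,S \mid \mathrm{der}\,T \mid\ !T$; $\lambda$ is the only binder, terms are taken up to $\alpha$-conversion, $T\{S/x\}$ is capture-avoiding substitution. Contexts: $C ::= [\cdot] \mid \lambda x.C \mid C\,T \mid T\,C \mid \mathrm{der}\,C \mid\ !C$; ground contexts: $W ::= [\cdot] \mid \lambda x.W \mid W\,T \mid T\,W \mid \mathrm{der}\,W$. Root steps: $(\lambda x.T)(!S)\mapsto_v T\{S/x\}$, $\mathrm{der}(!T)\mapsto_d T$. For $r\in\{v,d\}$, $T\to_r S$ iff $T=C[T']$, $S=C[S']$ for some context $C$ with $T'\mapsto_r S'$; $\to_{wr}$ is the same with ground contexts only. Notation: $\cdot$ is relational composition (first the left relation, then the right), ${}_r\!\leftarrow$ is the converse of $\to_r$, ${}^*$ denotes reflexive-transitive closure, and $=$ is the identity relation. *)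

(* Defs.v *)
(* Terms of the bang calculus up to alpha-conversion,
   represented with de Bruijn indices (free variables = indices escaping
   all binders; the set of variables is nat, countably infinite). *)
From Stdlib Require Import Arith Relations.

Inductive term : Type :=
  | Var : nat -> term
  | Lam : term -> term
  | App : term -> term -> term
  | Der : term -> term
  | Bang : term -> term.

Fixpoint lift (k : nat) (t : term) : term :=
  match t with
  | Var n => if n <? k then Var n else Var (S n)
  | Lam t1 => Lam (lift (S k) t1)
  | App t1 t2 => App (lift k t1) (lift k t2)
  | Der t1 => Der (lift k t1)
  | Bang t1 => Bang (lift k t1)
  end.

(* subst k s t : capture-avoiding substitution of s for index k in t,
   decrementing indices above k (the binder being removed). *)
Fixpoint subst (k : nat) (s : term) (t : term) : term :=
  match t with
  | Var n =>
      if n <? k then Var n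
      else if n =? k then s
      else Var (pred n)
  | Lam t1 => Lam (subst (S k) (lift 0 s) t1)
  | App t1 t2 => App (subst k s t1) (subst k s t2)
  | Der t1 => Der (subst k s t1)
  | Bang t1 => Bang (subst k s t1)
  end.

(* T{S/x} where x is the variable bound by the removed lambda *)
Definition subst0 (t s : term) : term := subst 0 s t.

Inductive root_v : term -> term -> Prop :=
  | root_v_intro : forall T S, root_v (App (Lam T) (Bang S)) (subst0 T S).
Inductive root_d : term -> term -> Prop :=
  | root_d_intro : forall T, root_d (Der (Bang T)) T.

Inductive ctx : Type :=
  | Hole : ctx
  | CLam : ctx -> ctx
  | CAppL : ctx -> term -> ctx
  | CAppR : term -> ctx -> ctx
  | CDer : ctx -> ctx
  | CBang : ctx -> ctx.

Fixpoint plug (C : ctx) (t : term) : term :=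
  match C with
  | Hole => t
  | CLam C1 => Lam (plug C1 t)
  | CAppL C1 u => App (plug C1 t) u
  | CAppR u C1 => App u (plug C1 t)
  | CDer C1 => Der (plug C1 t)
  | CBang C1 => Bang (plug C1 t)
  end.

Fixpoint ground (C : ctx) : Prop :=
  match C with
  | Hole => True
  | CLam C1 => ground C1
  | CAppL C1 _ => ground C1
  | CAppR _ C1 => ground C1
  | CDer C1 => ground C1
  | CBang _ => False
  end.

Definition ctx_clos (r : relation term) : relation term :=
  fun t s => exists C t' s', t = plug C t' /\ s = plug C s' /\ r t' s'.
Definition wctx_clos (r : relation term) : relation term :=
  fun t s => exists C t' s', ground C /\ t = plug C t' /\ s = plug C s' /\ r t' s'.

Definition step_v := ctx_clos root_v.
Definition step_d := ctx_clos root_d.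
Definition step_wv := wctx_clos root_v.
Definition step_wd := wctx_clos root_d.

Definition rcomp (R S : relation term) : relation term :=
  fun x z => exists y, R x y /\ S y z.
Definition conv (R : relation term) : relation term := fun x y => R y x.
Definition rstar (R : relation term) : relation term := clos_refl_trans term R.
Definition runion (R S : relation term) : relation term := fun x y => R x y \/ S x y.
Definition ident : relation term := fun x y => x = y.
Definition rincl (R S : relation term) : Prop := forall x y, R x y -> S x y.

Definition quasi_strongly_confluent (R : relation term) : Prop :=
  rincl (rcomp (conv R) R) (runion (rcomp R (conv R)) ident).

(* Main.v *)
Require Import Defs.
From Stdlib Require Import Relations.
From Stdlib Require Import Arith Lia.

Ltac arith := repeat (cbn [lift subst] in *; match goal with
  | |- context [?a <? ?b] => destruct (Nat.ltb_spec a b)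
  | |- context [?a =? ?b] => destruct (Nat.eqb_spec a b) end); try lia;
  try reflexivity; try (f_equal; lia).

Lemma lift_lift : forall t k j, k <= j -> lift k (lift j t) = lift (S j) (lift k t).
Proof.
  induction t; intros k j Hkj; simpl.
  - arith.
  - f_equal; apply IHt; lia.
  - f_equal; auto.
  - f_equal; auto.
  - f_equal; auto.
Qed.

Lemma subst_lift : forall t k s, subst k s (lift k t) = t.
Proof.
  induction t; intros k s; simpl.
  - arith.
  - f_equal; auto.
  - f_equal; auto.
  - f_equal; auto.
  - f_equal; auto.
Qed.

Lemma lift_subst : forall t k j s, k <= j ->
  lift k (subst j s t) = subst (S j) (lift k s) (lift k t).
Proof.
  induction t; intros k j s Hkj; simpl.
  - arith.
  - f_equal. rewrite IHt by lia. f_equal. first [apply lift_lift; lia | symmetry; apply lift_lift; lia].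
  - f_equal; auto.
  - f_equal; auto.
  - f_equal; auto.
Qed.

Lemma lift_subst2 : forall t k j s, k <= j ->
  lift j (subst k s t) = subst k (lift j s) (lift (S j) t).
Proof.
  induction t; intros k j s Hkj; simpl.
  - arith.
  - f_equal. rewrite IHt by lia. f_equal. first [apply lift_lift; lia | symmetry; apply lift_lift; lia].
  - f_equal; auto.
  - f_equal; auto.
  - f_equal; auto.
Qed.

Lemma subst_subst : forall t k j s u, k <= j ->
  subst j s (subst k u t) = subst k (subst j s u) (subst (S j) (lift k s) t).
Proof.
  induction t; intros k j s u Hkj; simpl.
  - arith. symmetry; apply subst_lift.
  - f_equal. rewrite IHt by lia. f_equal.
    + symmetry; apply lift_subst; lia.
    + f_equal. first [apply lift_lift; lia | symmetry; apply lift_lift; lia].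
  - f_equal; auto.
  - f_equal; auto.
  - f_equal; auto.
Qed.
Inductive st (r : relation term) (b : bool) : term -> term -> Prop :=
| st_root : forall t s, r t s -> st r b t s
| st_lam : forall t s, st r b t s -> st r b (Lam t) (Lam s)
| st_appl : forall t s u, st r b t s -> st r b (App t u) (App s u)
| st_appr : forall t s u, st r b t s -> st r b (App u t) (App u s)
| st_der : forall t s, st r b t s -> st r b (Der t) (Der s)
| st_bang : forall t s, b = true -> st r b t s -> st r b (Bang t) (Bang s).

Lemma ctx_st r b C t s : (b = false -> ground C) -> r t s -> st r b (plug C t) (plug C s).
Proof.
  intros G H; induction C; simpl in *.
  - apply st_root; auto.
  - apply st_lam; auto.
  - apply st_appl; auto.
  - apply st_appr; auto.
  - apply st_der; auto.
  - assert (b = true) by (destruct b; auto; exfalso; apply G; auto). subst.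
    apply st_bang; auto; apply IHC; discriminate.
Qed.

Lemma st_ctx r b t s : st r b t s -> exists C t' s', (b = false -> ground C) /\ t = plug C t' /\ s = plug C s' /\ r t' s'.
Proof.
  induction 1.
  - exists Hole, t, s; simpl; auto.
  - destruct IHst as (C&t'&s'&G&->&->&R); exists (CLam C), t', s'; simpl; auto.
  - destruct IHst as (C&t'&s'&G&->&->&R); exists (CAppL C u), t', s'; simpl; auto.
  - destruct IHst as (C&t'&s'&G&->&->&R); exists (CAppR u C), t', s'; simpl; auto.
  - destruct IHst as (C&t'&s'&G&->&->&R); exists (CDer C), t', s'; simpl; auto.
  - destruct IHst as (C&t'&s'&G&->&->&R); exists (CBang C), t', s'; simpl; repeat split; auto; congruence.
Qed.

Lemma full_eq r x y : ctx_clos r x y <-> st r true x y.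
Proof.
  split.
  - intros (C&t'&s'&->&->&R); apply ctx_st; auto; discriminate.
  - intros H; destruct (st_ctx _ _ _ _ H) as (C&t'&s'&_&->&->&R); exists C, t', s'; auto.
Qed.

Lemma weak_eq r x y : wctx_clos r x y <-> st r false x y.
Proof.
  split.
  - intros (C&t'&s'&G&->&->&R); apply ctx_st; auto.
  - intros H; destruct (st_ctx _ _ _ _ H) as (C&t'&s'&G&->&->&R); exists C, t', s'; auto.
Qed.

Lemma st_lift_gen r b : (forall k t t', r t t' -> r (lift k t) (lift k t')) ->
  forall t t', st r b t t' -> forall k, st r b (lift k t) (lift k t').
Proof.
  intros Hr; induction 1; intros k; simpl.
  - apply st_root; auto.
  - apply st_lam; auto.
  - apply st_appl; auto.
  - apply st_appr; auto.
  - apply st_der; auto.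
  - apply st_bang; auto.
Qed.

Lemma st_subst_gen r b : (forall k s t t', r t t' -> r (subst k s t) (subst k s t')) ->
  forall t t', st r b t t' -> forall k s, st r b (subst k s t) (subst k s t').
Proof.
  intros Hr; induction 1; intros k s0; simpl.
  - apply st_root; auto.
  - apply st_lam; auto.
  - apply st_appl; auto.
  - apply st_appr; auto.
  - apply st_der; auto.
  - apply st_bang; auto.
Qed.

Lemma root_v_lift k t t' : root_v t t' -> root_v (lift k t) (lift k t').
Proof.
  destruct 1; simpl. unfold subst0. rewrite lift_subst2 by lia. constructor.
Qed.
Lemma root_v_subst k s t t' : root_v t t' -> root_v (subst k s t) (subst k s t').
Proof.
  destruct 1; simpl. unfold subst0. rewrite subst_subst by lia. constructor.
Qed.
Lemma root_d_lift k t t' : root_d t t' -> root_d (lift k t) (lift k t').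
Proof. destruct 1; simpl; constructor. Qed.
Lemma root_d_subst k s t t' : root_d t t' -> root_d (subst k s t) (subst k s t').
Proof. destruct 1; simpl; constructor. Qed.

Lemma star_cong (R : relation term) (f : term -> term) :
  (forall x y, R x y -> R (f x) (f y)) -> forall x y, rstar R x y -> rstar R (f x) (f y).
Proof.
  intros H x y; induction 1.
  - apply rt_step; auto.
  - apply rt_refl.
  - eapply rt_trans; eauto.
Qed.

Lemma subst_right r : (forall k t t', r t t' -> r (lift k t) (lift k t')) ->
  forall t k s s', st r true s s' -> rstar (st r true) (subst k s t) (subst k s' t).
Proof.
  intros Hr; induction t; intros k s s' H; simpl.
  - destruct (n <? k). apply rt_refl. destruct (n =? k). apply rt_step; auto. apply rt_refl.
  - apply (star_cong _ Lam). intros; apply st_lam; auto.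
    apply IHt. apply st_lift_gen; auto.
  - eapply rt_trans.
    + apply (star_cong _ (fun x => App x (subst k s t2))). intros; apply st_appl; auto. apply IHt1; eauto.
    + apply (star_cong _ (fun x => App (subst k s' t1) x)). intros; apply st_appr; auto. apply IHt2; eauto.
  - apply (star_cong _ Der). intros; apply st_der; auto. auto.
  - apply (star_cong _ Bang). intros; apply st_bang; auto. auto.
Qed.

Lemma inv_rv x y : root_v x y -> exists T S, x = App (Lam T) (Bang S) /\ y = subst0 T S.
Proof. destruct 1; eauto. Qed.
Lemma inv_rd x y : root_d x y -> x = Der (Bang y).
Proof. destruct 1; eauto. Qed.

Lemma st_inv_lam r b t y : st r b (Lam t) y -> r (Lam t) y \/ exists t', y = Lam t' /\ st r b t t'.
Proof. intros H; inversion H; subst; eauto. Qed.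
Lemma st_inv_app r b t u y : st r b (App t u) y -> r (App t u) y \/
  (exists t', y = App t' u /\ st r b t t') \/ (exists u', y = App t u' /\ st r b u u').
Proof. intros H; inversion H; subst; eauto. Qed.
Lemma st_inv_der r b t y : st r b (Der t) y -> r (Der t) y \/ exists t', y = Der t' /\ st r b t t'.
Proof. intros H; inversion H; subst; eauto. Qed.
Lemma st_inv_bang r b t y : st r b (Bang t) y -> r (Bang t) y \/ exists t', y = Bang t' /\ b = true /\ st r b t t'.
Proof. intros H; inversion H; subst; eauto. Qed.

Ltac bad_root R := first [ apply inv_rd in R; discriminate | apply inv_rv in R as (?&?&?&?); discriminate ].

Lemma dd b t a c : st root_d b t a -> st root_d b t c -> a = c \/ exists e, st root_d b a e /\ st root_d b c e.
Proof.
  intros H; revert c; induction H; intros c H2.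
  - apply inv_rd in H; subst. apply st_inv_der in H2 as [R|(t'&->&H2)].
    + apply inv_rd in R. left; congruence.
    + apply st_inv_bang in H2 as [R|(t''&->&Hb&H2)]. bad_root R.
      right; exists t''; split; auto. apply st_root; constructor.
  - apply st_inv_lam in H2 as [R|(t'&->&H2)]. bad_root R.
    destruct (IHst _ H2) as [->|(e&H3&H4)]; [left; auto| right; exists (Lam e); split; apply st_lam; auto].
  - apply st_inv_app in H2 as [R|[(t'&->&H2)|(u'&->&H2)]]. bad_root R.
    + destruct (IHst _ H2) as [->|(e&H3&H4)]; [left; auto| right; exists (App e u); split; apply st_appl; auto].
    + right; exists (App s u'); split; [apply st_appr|apply st_appl]; auto.
  - apply st_inv_app in H2 as [R|[(u'&->&H2)|(t'&->&H2)]]. bad_root R.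
    + right; exists (App u' s); split; [apply st_appl|apply st_appr]; auto.
    + destruct (IHst _ H2) as [->|(e&H3&H4)]; [left; auto| right; exists (App u e); split; apply st_appr; auto].
  - apply st_inv_der in H2 as [R|(t'&->&H2)].
    + apply inv_rd in R; injection R; clear R; intros; subst. apply st_inv_bang in H as [R|(s'&->&Hb&H)]. bad_root R.
      right; exists s'; split; auto. apply st_root; constructor.
    + destruct (IHst _ H2) as [->|(e&H3&H4)]; [left; auto| right; exists (Der e); split; apply st_der; auto].
  - apply st_inv_bang in H2 as [R|(t'&->&Hb&H2)]. bad_root R.
    destruct (IHst _ H2) as [->|(e&H3&H4)]; [left; auto| right; exists (Bang e); split; apply st_bang; auto].
Qed.

Lemma vv t a c : st root_v false t a -> st root_v false t c -> a = c \/ exists e, st root_v false a e /\ st root_v false c e.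
Proof.
  intros H; revert c; induction H; intros c H2.
  - apply inv_rv in H as (T&S&->&->). apply st_inv_app in H2 as [R|[(t'&->&H2)|(u'&->&H2)]].
    + apply inv_rv in R as (T'&S'&E&->). injection E; intros; subst; left; auto.
    + apply st_inv_lam in H2 as [R|(T'&->&H2)]. bad_root R.
      right; exists (subst0 T' S); split.
      * unfold subst0; apply st_subst_gen; auto. exact root_v_subst.
      * apply st_root; constructor.
    + apply st_inv_bang in H2 as [R|(T'&->&Hb&H2)]. bad_root R. discriminate.
  - apply st_inv_lam in H2 as [R|(t'&->&H2)]. bad_root R.
    destruct (IHst _ H2) as [->|(e&H3&H4)]; [left; auto| right; exists (Lam e); split; apply st_lam; auto].
  - apply st_inv_app in H2 as [R|[(t'&->&H2)|(u'&->&H2)]].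
    + apply inv_rv in R as (T&S&E&->). injection E; intros; subst.
      apply st_inv_lam in H as [R|(T'&->&H)]. bad_root R.
      right; exists (subst0 T' S); split.
      * apply st_root; constructor.
      * unfold subst0; apply st_subst_gen; auto. exact root_v_subst.
    + destruct (IHst _ H2) as [->|(e&H3&H4)]; [left; auto| right; exists (App e u); split; apply st_appl; auto].
    + right; exists (App s u'); split; [apply st_appr|apply st_appl]; auto.
  - apply st_inv_app in H2 as [R|[(u'&->&H2)|(t'&->&H2)]].
    + apply inv_rv in R as (T&S&E&->). injection E; intros; subst.
      apply st_inv_bang in H as [R|(T'&->&Hb&H)]. bad_root R. discriminate.
    + right; exists (App u' s); split; [apply st_appl|apply st_appr]; auto.
    + destruct (IHst _ H2) as [->|(e&H3&H4)]; [left; auto| right; exists (App u e); split; apply st_appr; auto].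
  - apply st_inv_der in H2 as [R|(t'&->&H2)]. bad_root R.
    destruct (IHst _ H2) as [->|(e&H3&H4)]; [left; auto| right; exists (Der e); split; apply st_der; auto].
  - discriminate.
Qed.

Lemma dv_w t a c : st root_d false t a -> st root_v false t c -> exists e, st root_v false a e /\ st root_d false c e.
Proof.
  intros H; revert c; induction H; intros c H2.
  - apply inv_rd in H; subst. apply st_inv_der in H2 as [R|(t'&->&H2)]. bad_root R.
    apply st_inv_bang in H2 as [R|(t''&->&Hb&H2)]. bad_root R. discriminate.
  - apply st_inv_lam in H2 as [R|(t'&->&H2)]. bad_root R.
    destruct (IHst _ H2) as (e&H3&H4); exists (Lam e); split; apply st_lam; auto.
  - apply st_inv_app in H2 as [R|[(t'&->&H2)|(u'&->&H2)]].
    + apply inv_rv in R as (T&S&E&->). injection E; intros; subst.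
      apply st_inv_lam in H as [R|(T'&->&H)]. bad_root R.
      exists (subst0 T' S); split.
      * apply st_root; constructor.
      * unfold subst0; apply st_subst_gen; auto. exact root_d_subst.
    + destruct (IHst _ H2) as (e&H3&H4); exists (App e u); split; apply st_appl; auto.
    + exists (App s u'); split; [apply st_appr|apply st_appl]; auto.
  - apply st_inv_app in H2 as [R|[(u'&->&H2)|(t'&->&H2)]].
    + apply inv_rv in R as (T&S&E&->). injection E; intros; subst.
      apply st_inv_bang in H as [R|(T'&->&Hb&H)]. bad_root R. discriminate.
    + exists (App u' s); split; [apply st_appl|apply st_appr]; auto.
    + destruct (IHst _ H2) as (e&H3&H4); exists (App u e); split; apply st_appr; auto.
  - apply st_inv_der in H2 as [R|(t'&->&H2)]. bad_root R.
    destruct (IHst _ H2) as (e&H3&H4); exists (Der e); split; apply st_der; auto.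
  - discriminate.
Qed.

Lemma dv t a c : st root_d true t a -> st root_v true t c -> exists e, st root_v true a e /\ rstar (st root_d true) c e.
Proof.
  intros H; revert c; induction H; intros c H2.
  - apply inv_rd in H; subst. apply st_inv_der in H2 as [R|(t'&->&H2)]. bad_root R.
    apply st_inv_bang in H2 as [R|(t''&->&Hb&H2)]. bad_root R.
    exists t''; split; auto. apply rt_step, st_root; constructor.
  - apply st_inv_lam in H2 as [R|(t'&->&H2)]. bad_root R.
    destruct (IHst _ H2) as (e&H3&H4); exists (Lam e); split. apply st_lam; auto.
    apply (star_cong _ Lam); auto. intros; apply st_lam; auto.
  - apply st_inv_app in H2 as [R|[(t'&->&H2)|(u'&->&H2)]].
    + apply inv_rv in R as (T&S&E&->). injection E; intros; subst.
      apply st_inv_lam in H as [R|(T'&->&H)]. bad_root R.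
      exists (subst0 T' S); split.
      * apply st_root; constructor.
      * apply rt_step. unfold subst0; apply st_subst_gen; auto. exact root_d_subst.
    + destruct (IHst _ H2) as (e&H3&H4); exists (App e u); split. apply st_appl; auto.
      apply (star_cong _ (fun x => App x u)); auto. intros; apply st_appl; auto.
    + exists (App s u'); split. apply st_appr; auto. apply rt_step; apply st_appl; auto.
  - apply st_inv_app in H2 as [R|[(u'&->&H2)|(t'&->&H2)]].
    + apply inv_rv in R as (T&S&E&->). injection E; intros; subst.
      apply st_inv_bang in H as [R|(S'&->&Hb&H)]. bad_root R.
      exists (subst0 T S'); split.
      * apply st_root; constructor.
      * unfold subst0; apply subst_right; auto. exact root_d_lift.
    + exists (App u' s); split. apply st_appl; auto. apply rt_step; apply st_appr; auto.
    + destruct (IHst _ H2) as (e&H3&H4); exists (App u e); split. apply st_appr; auto.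
      apply (star_cong _ (fun x => App u x)); auto. intros; apply st_appr; auto.
  - apply st_inv_der in H2 as [R|(t'&->&H2)]. bad_root R.
    destruct (IHst _ H2) as (e&H3&H4); exists (Der e); split. apply st_der; auto.
    apply (star_cong _ Der); auto. intros; apply st_der; auto.
  - apply st_inv_bang in H2 as [R|(t'&->&Hb&H2)]. bad_root R.
    destruct (IHst _ H2) as (e&H3&H4); exists (Bang e); split. apply st_bang; auto.
    apply (star_cong _ Bang); auto. intros; apply st_bang; auto.
Qed.

Lemma dstar_v t a c : rstar (st root_d true) t a -> st root_v true t c ->
  exists e, st root_v true a e /\ rstar (st root_d true) c e.
Proof.
  intros H; apply clos_rt_rt1n in H; revert c; induction H; intros c H2.
  - exists c; split; auto. apply rt_refl.
  - destruct (dv _ _ _ H H2) as (e1&H3&H4).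
    destruct (IHclos_refl_trans_1n _ H3) as (e&H5&H6).
    exists e; split; auto. eapply rt_trans; eauto.
Qed.

Lemma dstar_vstar t a c : rstar (st root_d true) t a -> rstar (st root_v true) t c ->
  exists e, rstar (st root_v true) a e /\ rstar (st root_d true) c e.
Proof.
  intros Ha H2; apply clos_rt_rt1n in H2; revert a Ha; induction H2; intros a Ha.
  - exists a; split; auto. apply rt_refl.
  - destruct (dstar_v _ _ _ Ha H) as (e1&H3&H4).
    destruct (IHclos_refl_trans_1n _ H4) as (e&H5&H6).
    exists e; split; auto. eapply rt_trans; [apply rt_step|]; eauto.
Qed.

Inductive par : term -> term -> Prop :=
| par_var n : par (Var n) (Var n)
| par_lam t t' : par t t' -> par (Lam t) (Lam t')
| par_app t t' u u' : par t t' -> par u u' -> par (App t u) (App t' u')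
| par_der t t' : par t t' -> par (Der t) (Der t')
| par_bang t t' : par t t' -> par (Bang t) (Bang t')
| par_beta t t' u u' : par t t' -> par u u' -> par (App (Lam t) (Bang u)) (subst0 t' u').

Lemma par_refl t : par t t.
Proof. induction t; constructor; auto. Qed.

Lemma par_lift t t' : par t t' -> forall k, par (lift k t) (lift k t').
Proof.
  induction 1; intros k; simpl; try (constructor; auto; fail).
  - apply par_refl.
  - unfold subst0; rewrite lift_subst2 by lia. apply par_beta; auto.
Qed.

Lemma par_subst t t' : par t t' -> forall k s s', par s s' -> par (subst k s t) (subst k s' t').
Proof.
  induction 1; intros k s s' Hs; simpl.
  - destruct (n <? k). constructor. destruct (n =? k). auto. constructor.
  - constructor; apply IHpar; apply par_lift; auto.
  - constructor; auto.
  - constructor; auto.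
  - constructor; auto.
  - unfold subst0; rewrite subst_subst by lia. apply par_beta; auto. apply IHpar1; apply par_lift; auto.
Qed.

Lemma st_par t s : st root_v true t s -> par t s.
Proof.
  induction 1; try (constructor; auto using par_refl; fail).
  destruct H; apply par_beta; apply par_refl.
Qed.

Lemma par_star t s : par t s -> rstar (st root_v true) t s.
Proof.
  induction 1.
  - apply rt_refl.
  - apply (star_cong _ Lam); auto. intros; apply st_lam; auto.
  - eapply rt_trans.
    + apply (star_cong _ (fun x => App x u)); eauto. intros; apply st_appl; auto.
    + apply (star_cong _ (fun x => App t' x)); eauto. intros; apply st_appr; auto.
  - apply (star_cong _ Der); auto. intros; apply st_der; auto.
  - apply (star_cong _ Bang); auto. intros; apply st_bang; auto.
  - eapply rt_trans; [|apply rt_step, st_root; constructor].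
    eapply rt_trans.
    + apply (star_cong _ (fun x => App (Lam x) (Bang u))); eauto. intros; apply st_appl, st_lam; auto.
    + apply (star_cong _ (fun x => App (Lam t') (Bang x))); eauto. intros; apply st_appr, st_bang; auto.
Qed.

Lemma par_inv_lam t y : par (Lam t) y -> exists t', y = Lam t' /\ par t t'.
Proof. intros H; inversion H; subst; eauto. Qed.
Lemma par_inv_bang t y : par (Bang t) y -> exists t', y = Bang t' /\ par t t'.
Proof. intros H; inversion H; subst; eauto. Qed.

Lemma par_inv_app t u y : par (App t u) y ->
  (exists t' u', y = App t' u' /\ par t t' /\ par u u') \/
  (exists T T' U U', t = Lam T /\ u = Bang U /\ y = subst0 T' U' /\ par T T' /\ par U U').
Proof. intros H; inversion H; subst; [left|right]; eauto 10. Qed.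
Lemma par_inv_der t y : par (Der t) y -> exists t', y = Der t' /\ par t t'.
Proof. intros H; inversion H; subst; eauto. Qed.
Lemma par_inv_var n y : par (Var n) y -> y = Var n.
Proof. intros H; inversion H; subst; eauto. Qed.

Lemma par_diamond t a c : par t a -> par t c -> exists e, par a e /\ par c e.
Proof.
  intros H; revert c; induction H; intros c H2.
  - apply par_inv_var in H2; subst. exists (Var n); split; constructor.
  - apply par_inv_lam in H2 as (c1&->&H2).
    destruct (IHpar _ H2) as (e&H3&H4). exists (Lam e); split; constructor; auto.
  - apply par_inv_app in H2 as [(c1&c2&->&H3&H4)|(T&T2&U&U2&->&->&->&H3&H4)].
    + destruct (IHpar1 _ H3) as (e1&H5&H6). destruct (IHpar2 _ H4) as (e2&H7&H8).
      exists (App e1 e2); split; constructor; auto.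
    + destruct (IHpar1 (Lam T2)) as (e1&H5&H6). constructor; auto.
      destruct (IHpar2 (Bang U2)) as (e2&H7&H8). constructor; auto.
      apply par_inv_lam in H as (A1&->&HA1). apply par_inv_lam in H5 as (E&->&HE).
      apply par_inv_lam in H6 as (E'&HE'&HT2). injection HE'; intros; subst.
      apply par_inv_bang in H0 as (A2&->&HA2). apply par_inv_bang in H7 as (F&->&HF).
      apply par_inv_bang in H8 as (F'&HF'&HU2). injection HF'; intros; subst.
      exists (subst0 E' F'); split.
      * apply par_beta; auto.
      * unfold subst0; apply par_subst; auto.
  - apply par_inv_der in H2 as (c1&->&H2).
    destruct (IHpar _ H2) as (e&H3&H4). exists (Der e); split; constructor; auto.
  - apply par_inv_bang in H2 as (c1&->&H2).
    destruct (IHpar _ H2) as (e&H3&H4). exists (Bang e); split; constructor; auto.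
  - apply par_inv_app in H2 as [(c1&c2&->&H3&H5)|(T&T2&U&U2&E1&E2&->&H3&H5)].
    + apply par_inv_lam in H3 as (T2&->&H3). apply par_inv_bang in H5 as (U2&->&H5).
      destruct (IHpar1 _ H3) as (e1&H6&H7). destruct (IHpar2 _ H5) as (e2&H8&H9).
      exists (subst0 e1 e2); split.
      * unfold subst0; apply par_subst; auto.
      * apply par_beta; auto.
    + injection E1; injection E2; intros; subst.
      destruct (IHpar1 _ H3) as (e1&H6&H7). destruct (IHpar2 _ H5) as (e2&H8&H9).
      exists (subst0 e1 e2); split; unfold subst0; apply par_subst; auto.
Qed.

Lemma par_strip t a c : par t a -> clos_refl_trans_1n term par t c -> exists e, clos_refl_trans_1n term par a e /\ par c e.
Proof.
  intros H H2; revert a H; induction H2; intros a Ha.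
  - exists a; split; [constructor | auto].
  - destruct (par_diamond _ _ _ Ha H) as (e1&H3&H4).
    destruct (IHclos_refl_trans_1n _ H4) as (e&H5&H6).
    exists e; split; auto. econstructor; eauto.
Qed.

Lemma par_conf t a c : clos_refl_trans_1n term par t a -> clos_refl_trans_1n term par t c ->
  exists e, clos_refl_trans_1n term par a e /\ clos_refl_trans_1n term par c e.
Proof.
  intros H; revert c; induction H; intros c H2.
  - exists c; split; auto. constructor.
  - destruct (par_strip _ _ _ H H2) as (e1&H3&H4).
    destruct (IHclos_refl_trans_1n _ H3) as (e&H5&H6).
    exists e; split; auto. econstructor; eauto.
Qed.

Lemma vstar_par t s : rstar (st root_v true) t s -> clos_refl_trans_1n term par t s.
Proof.
  intros H; apply clos_rt_rt1n in H; induction H. constructor. econstructor; eauto using st_par.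
Qed.
Lemma par_vstar t s : clos_refl_trans_1n term par t s -> rstar (st root_v true) t s.
Proof.
  induction 1. apply rt_refl. eapply rt_trans; [apply par_star; eauto | eauto].
Qed.

Lemma rstar_ext (R1 R2 : relation term) : (forall x y, R1 x y <-> R2 x y) ->
  forall x y, rstar R1 x y -> rstar R2 x y.
Proof.
  intros E x y; induction 1. apply rt_step, E; auto. apply rt_refl. eapply rt_trans; eauto.
Qed.

Theorem mainTheorem6 :
  (* (1) *)
  quasi_strongly_confluent step_wv /\
  (* (2) *)
  (quasi_strongly_confluent step_wd /\ quasi_strongly_confluent step_d) /\
  (* (3) *)
  (rincl (rcomp (conv step_wd) step_wv) (rcomp step_wv (conv step_wd)) /\
   rincl (rcomp (conv step_d) step_v) (rcomp step_v (conv (rstar step_d))) /\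
   rincl (rcomp (conv (rstar step_d)) (rstar step_v))
         (rcomp (rstar step_v) (conv (rstar step_d)))) /\
  (* (4) *)
  rincl (rcomp (conv (rstar step_v)) (rstar step_v))
        (rcomp (rstar step_v) (conv (rstar step_v))).
Proof.
  unfold quasi_strongly_confluent, rincl, rcomp, conv, runion, ident, step_wv, step_wd, step_v, step_d.
  assert (Ed : forall x y, ctx_clos root_d x y <-> st root_d true x y) by (intros; apply full_eq).
  assert (Ev : forall x y, ctx_clos root_v x y <-> st root_v true x y) by (intros; apply full_eq).
  assert (Ed' : forall x y, st root_d true x y <-> ctx_clos root_d x y) by (intros; symmetry; apply full_eq).
  assert (Ev' : forall x y, st root_v true x y <-> ctx_clos root_v x y) by (intros; symmetry; apply full_eq).
  repeat split.
  - intros x y (t&H1&H2). apply weak_eq in H1, H2.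
    destruct (vv _ _ _ H1 H2) as [->|(e&H3&H4)]; [right; auto | left; exists e; split; apply weak_eq; auto].
  - intros x y (t&H1&H2). apply weak_eq in H1, H2.
    destruct (dd _ _ _ _ H1 H2) as [->|(e&H3&H4)]; [right; auto | left; exists e; split; apply weak_eq; auto].
  - intros x y (t&H1&H2). apply full_eq in H1, H2.
    destruct (dd _ _ _ _ H1 H2) as [->|(e&H3&H4)]; [right; auto | left; exists e; split; apply full_eq; auto].
  - intros x y (t&H1&H2). apply weak_eq in H1, H2.
    destruct (dv_w _ _ _ H1 H2) as (e&H3&H4); exists e; split; apply weak_eq; auto.
  - intros x y (t&H1&H2). apply full_eq in H1, H2.
    destruct (dv _ _ _ H1 H2) as (e&H3&H4); exists e; split. apply full_eq; auto.
    apply (rstar_ext _ _ Ed'); auto.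
  - intros x y (t&H1&H2). apply (rstar_ext _ _ Ed) in H1. apply (rstar_ext _ _ Ev) in H2.
    destruct (dstar_vstar _ _ _ H1 H2) as (e&H3&H4); exists e; split.
    apply (rstar_ext _ _ Ev'); auto. apply (rstar_ext _ _ Ed'); auto.
  - intros x y (t&H1&H2). apply (rstar_ext _ _ Ev) in H1, H2.
    apply vstar_par in H1, H2.
    destruct (par_conf _ _ _ H1 H2) as (e&H3&H4); exists e; split;
      apply (rstar_ext _ _ Ev'); apply par_vstar; auto.
Qed.
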